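(* Let $f,g_1,\dots,g_m,h_1,\dots,h_l\in\mathbb{R}[\mathbf{x}]$ and assume $R-\|\mathbf{x}\|_2^2\in\{g_1,\dots,g_m\}$ for some $R>0$. Then for every integer $k\ge k_{\min}$ the SOS semidefinite program $(\mathrm{SOS}_k)$ satisfies Slater's condition, i.e. there exist $\xi\in\mathbb{R}$, real symmetric positive definite matrices $\mathbf{G}_0$ (size $s(k)$), $\mathbf{G}_i$ (size $s(k-\lceil g_i\rceil)$, $i\in[m]$) and vectors $\mathbf{u}_j\in\mathbb{R}^{s(2(k-\lceil h_j\rceil))}$ satisfying its polynomial identity constraint. As a consequence, strong duality holds between $(\mathrm{SOS}_k)$ and $(\mathrm{MOM}_k)$, i.e. $\rho_k=\tau_k$, for every integer $k\ge k_{\min}$.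
   Context: $\mathbf{x}=(x_1,\dots,x_n)$; $\lceil p\rceil:=\lceil\deg(p)/2\rceil$; $\mathbb{N}^n_d:=\{\alpha\in\mathbb{N}^n:|\alpha|\le d\}$; $s(d):=\binom{n+d}{n}$; $\mathbf{v}_d=(\mathbf{x}^\alpha)_{\alpha\in\mathbb{N}^n_d}$; $k_{\min}:=\max\{\lceil f\rceil,\lceil g_i\rceil,\lceil h_j\rceil\}$. $(\mathrm{SOS}_k)$: $\rho_k:=\sup\{\xi:\ \mathbf{G}_i\succeq0,\ f-\xi=\mathbf{v}_k^\top\mathbf{G}_0\mathbf{v}_k+\sum_{i\in[m]}g_i\mathbf{v}_{k-\lceil g_i\rceil}^\top\mathbf{G}_i\mathbf{v}_{k-\lceil g_i\rceil}+\sum_{j\in[l]}h_j\mathbf{v}_{2(k-\lceil h_j\rceil)}^\top\mathbf{u}_j\}$, the supremum over $\xi\in\mathbb{R}$, symmetric $\mathbf{G}_0$ of size $s(k)$, $\mathbf{G}_i$ of size $s(k-\lceil g_i\rceil)$, and $\mathbf{u}_j\in\mathbb{R}^{s(2(k-\lceil h_j\rceil))}$, the equality being an identity of polynomials. $(\mathrm{MOM}_k)$: $\tau_k:=\inf\{L_{\mathbf{y}}(f):\ \mathbf{y}\in\mathbb{R}^{s(2k)},\ \mathbf{M}_k(\mathbf{y})\succeq0,\ y_{\mathbf{0}}=1,\ \mathbf{M}_{k-\lceil g_i\rceil}(g_i\mathbf{y})\succeq0\ (i\in[m]),\ \mathbf{M}_{k-\lceil h_j\rceil}(h_j\mathbf{y})=0\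 (j\in[l])\}$, where $\mathbf{y}=(y_\alpha)_{\alpha\in\mathbb{N}^n_{2k}}$, $L_{\mathbf{y}}(\sum_\alpha p_\alpha\mathbf{x}^\alpha)=\sum_\alpha p_\alpha y_\alpha$, $\mathbf{M}_d(\mathbf{y})=(y_{\alpha+\beta})_{\alpha,\beta\in\mathbb{N}^n_d}$, $\mathbf{M}_d(q\mathbf{y})=(\sum_\gamma q_\gamma y_{\alpha+\beta+\gamma})_{\alpha,\beta\in\mathbb{N}^n_d}$. *)

(* Defs.v *)
From mathcomp Require Import all_boot all_order all_algebra.
From mathcomp Require Import mpoly.
From mathcomp Require Import boolp classical_sets reals constructive_ereal ereal.
Set Implicit Arguments.
Unset Strict Implicit.
Unset Printing Implicit Defensive.
Import Order.TTheory GRing.Theory Num.Theory.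
Local Open Scope ring_scope.

Section POP.
Variables (R : realType) (n : nat).

(* total degree of a polynomial (deg 0 = 0) *)
Definition pdeg (p : {mpoly R[n]}) : nat := (msize p).-1.
(* \lceil p \rceil := \lceil deg(p)/2 \rceil *)
Definition hdeg (p : {mpoly R[n]}) : nat := uphalf (pdeg p).

Definition sdim (d : nat) : nat := #|{: 'X_{1..n < d.+1}}|.
(* the a-th exponent alpha in N^n_d (a fixed enumeration of N^n_d) *)
Definition mon (d : nat) (a : 'I_(sdim d)) : 'X_{1..n} :=
  bmnm (@enum_val _ (@predT 'X_{1..n < d.+1}) a).

(* v_d^T G v_d *)
Definition gram (d : nat) (G : 'M[R]_(sdim d)) : {mpoly R[n]} :=
  \sum_(a < sdim d) \sum_(b < sdim d) G a b *: 'X_[(mon a + mon b)%MM].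
(* v_d^T u *)
Definition lin (d : nat) (u : 'cV[R]_(sdim d)) : {mpoly R[n]} :=
  \sum_(a < sdim d) u a 0 *: 'X_[mon a].

End POP.

Definition psd (R : realType) (N : nat) (A : 'M[R]_N) : Prop :=
  A^T = A /\ forall x : 'cV[R]_N, 0 <= (x^T *m A *m x) 0 0.
Definition pd (R : realType) (N : nat) (A : 'M[R]_N) : Prop :=
  A^T = A /\ forall x : 'cV[R]_N, x != 0 -> 0 < (x^T *m A *m x) 0 0.

Section Relax.
Variables (R : realType) (n m l : nat).
Variables (f : {mpoly R[n]}) (g : 'I_m -> {mpoly R[n]}) (h : 'I_l -> {mpoly R[n]}).

Definition kmin : nat :=
  maxn (hdeg f) (maxn (\max_(i < m) hdeg (g i)) (\max_(j < l) hdeg (h j))).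

Definition sos_identity (k : nat) (xi : R) (G0 : 'M[R]_(sdim n k))
  (G : forall i : 'I_m, 'M[R]_(sdim n (k - hdeg (g i))))
  (u : forall j : 'I_l, 'cV[R]_(sdim n (2 * (k - hdeg (h j))))) : Prop :=
  f - xi%:MP = gram G0 + \sum_(i < m) g i * gram (G i)
                       + \sum_(j < l) h j * lin (u j).

Definition sos_feasible (k : nat) (xi : R) : Prop :=
  exists G0 : 'M[R]_(sdim n k),
  exists G : forall i : 'I_m, 'M[R]_(sdim n (k - hdeg (g i))),
  exists u : forall j : 'I_l, 'cV[R]_(sdim n (2 * (k - hdeg (h j)))),
    [/\ psd G0, forall i, psd (G i) & sos_identity xi G0 G u].

Definition sos_slater (k : nat) : Prop :=
  exists xi : R, exists G0 : 'M[R]_(sdim n k),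
  exists G : forall i : 'I_m, 'M[R]_(sdim n (k - hdeg (g i))),
  exists u : forall j : 'I_l, 'cV[R]_(sdim n (2 * (k - hdeg (h j)))),
    [/\ pd G0, forall i, pd (G i) & sos_identity xi G0 G u].

Definition rho (k : nat) : \bar R :=
  ereal_sup [set xi%:E | xi in [set xi | sos_feasible k xi]].

Definition yext (k : nat) (y : {ffun 'X_{1..n < (2 * k).+1} -> R})
  (a : 'X_{1..n}) : R := odflt 0 (omap y (insub a)).

Definition Ly (y : 'X_{1..n} -> R) (p : {mpoly R[n]}) : R :=
  \sum_(a <- msupp p) p@_a * y a.

Definition momM (d : nat) (y : 'X_{1..n} -> R) : 'M[R]_(sdim n d) :=
  \matrix_(a, b) y (mon a + mon b)%MM.

Definition locM (d : nat) (q : {mpoly R[n]}) (y : 'X_{1..n} -> R)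
  : 'M[R]_(sdim n d) :=
  \matrix_(a, b) Ly (fun c => y (mon a + mon b + c)%MM) q.

Definition mom_feasible (k : nat) (y : {ffun 'X_{1..n < (2 * k).+1} -> R})
  : Prop :=
  [/\ psd (momM k (yext y)),
      yext y 0%MM = 1,
      forall i, psd (locM (k - hdeg (g i)) (g i) (yext y))
    & forall j, locM (k - hdeg (h j)) (h j) (yext y) = 0].

Definition tau (k : nat) : \bar R :=
  ereal_inf [set (Ly (yext y) f)%:E | y in [set y : {ffun 'X_{1..n < (2 * k).+1} -> R} | mom_feasible y]].

End Relax.

(* Main.v *)
Require Import Defs.
From mathcomp Require Import all_boot all_order all_algebra.
From mathcomp Require Import ssrcomplements mpoly.
From mathcomp Require Import ring lra zify.
From Stdlib Require Import Lia.
From mathcomp Require Import boolp classical_sets reals constructive_ereal ereal.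
Import Order.TTheory GRing.Theory Num.Theory.
Local Open Scope ring_scope.
Set Implicit Arguments.
Unset Strict Implicit.
Unset Printing Implicit Defensive.
Section Mx.
Variable R : realType.

Definition qf N (A : 'M[R]_N) (x : 'cV[R]_N) := (x^T *m A *m x) 0 0.
Definition bf N (A : 'M[R]_N) (x y : 'cV[R]_N) :=
  \sum_i \sum_j x i 0 * A i j * y j 0.

Lemma qfE N (A : 'M[R]_N) x : qf A x = bf A x x.
Proof.
rewrite /qf /bf !mxE; under eq_bigr do rewrite !mxE big_distrl /=.
rewrite exchange_big; apply: eq_bigr => i _; apply: eq_bigr => j _.
by rewrite !mxE.
Qed.

Lemma sum_delta N (a : 'I_N) (F : 'I_N -> R) :
  \sum_i (i == a)%:R * F i = F a.
Proof.
rewrite (bigD1 a) //= eqxx mul1r big1 ?addr0 // => i /negbTE ->.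
by rewrite mul0r.
Qed.

Lemma sum_delta_r N (a : 'I_N) (F : 'I_N -> R) :
  \sum_i F i * (i == a)%:R = F a.
Proof. by rewrite -[RHS](sum_delta a); apply: eq_bigr => i _; rewrite mulrC. Qed.

Definition ev N (a : 'I_N) : 'cV[R]_N := \col_i (i == a)%:R.

Lemma bf_ev N (A : 'M[R]_N) a b : bf A (ev a) (ev b) = A a b.
Proof.
rewrite /bf; under eq_bigr do (under eq_bigr do rewrite !mxE).
transitivity (\sum_i (i == a)%:R * \sum_j A i j * (j == b)%:R).
  apply: eq_bigr => i _; rewrite big_distrr /=; apply: eq_bigr => j _.
  by rewrite mulrA.
by rewrite sum_delta sum_delta_r.
Qed.

Lemma bfDl N (A : 'M[R]_N) x y z s :
  bf A (x + s *: y) z = bf A x z + s * bf A y z.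
Proof.
rewrite /bf big_distrr -big_split /=; apply: eq_bigr => i _.
rewrite big_distrr -big_split /=; apply: eq_bigr => j _.
by rewrite !mxE; ring.
Qed.

Lemma bfDr N (A : 'M[R]_N) x y z s :
  bf A z (x + s *: y) = bf A z x + s * bf A z y.
Proof.
rewrite /bf big_distrr -big_split /=; apply: eq_bigr => i _.
rewrite big_distrr -big_split /=; apply: eq_bigr => j _.
by rewrite !mxE; ring.
Qed.

Lemma bfC N (A : 'M[R]_N) x y : A^T = A -> bf A x y = bf A y x.
Proof.
move=> sA; rewrite /bf exchange_big; apply: eq_bigr => i _.
apply: eq_bigr => j _; rewrite -{1}sA mxE; ring.
Qed.

Lemma psd_quad N (A : 'M[R]_N) x y s : psd A ->
  0 <= bf A x x + 2 * s * bf A x y + s ^+ 2 * bf A y y.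
Proof.
case=> sA pA; have : 0 <= qf A (x + s *: y) := pA _; rewrite qfE.
rewrite bfDl !bfDr (bfC y x sA).
suff -> : bf A x x + s * bf A x y + s * (bf A x y + s * bf A y y) =
  bf A x x + 2 * s * bf A x y + s ^+ 2 * bf A y y by [].
ring.
Qed.

Lemma psd_diag N (A : 'M[R]_N) a : psd A -> 0 <= A a a.
Proof. by move=> [_ pA]; have : 0 <= qf A (ev a) := pA _; rewrite qfE bf_ev. Qed.

Lemma psd_zero_row N (A : 'M[R]_N) a b : psd A -> A a a = 0 -> A a b = 0.
Proof.
move=> pA Aaa; have sA := pA.1.
have H s := psd_quad (ev b) (ev a) s pA.
have Aba : A b a = A a b by rewrite -{1}sA mxE.
apply/eqP/negPn/negP => nz.
have := H (- (A b b + 1) / (2 * A a b)).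
rewrite !bf_ev Aaa Aba.
have -> : 2 * (- (A b b + 1) / (2 * A a b)) * A a b = - (A b b + 1).
  by field; rewrite nz.
lra.
Qed.

End Mx.
Arguments ev {R N}.
Section Frob.
Variable R : realType.

Lemma bf_evr N (A : 'M[R]_N) x p : bf A x (ev p) = \sum_i x i 0 * A i p.
Proof.
rewrite /bf; apply: eq_bigr => i _.
transitivity (\sum_j (x i 0 * A i j) * (j == p)%:R).
  by apply: eq_bigr => j _; rewrite mxE.
by rewrite sum_delta_r.
Qed.

Lemma frob N (G M : 'M[R]_N) : psd G -> (forall x, 0 <= qf M x) ->
  0 <= \sum_a \sum_b G a b * M a b.
Proof.
move=> pG pM.
have [k Hk] := ubnP #|[set a | G a a != 0]|.
elim: k G pG Hk => // k IH G pG Hk.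
have [[p Gp]|] := pselect (exists p, G p p != 0); last first.
  move=> nex; rewrite big1 // => a _; rewrite big1 // => b _.
  have Gaa : G a a = 0 by apply/eqP/negPn/negP => H; apply: nex; exists a.
  by rewrite (psd_zero_row b pG Gaa) mul0r.
have cpos : 0 < G p p by rewrite lt_def Gp psd_diag.
set c := G p p in cpos Gp.
pose gv : 'cV[R]_N := \col_i G i p.
pose G' : 'M[R]_N := \matrix_(a, b) (G a b - c^-1 * G a p * G b p).
have sG : G^T = G := pG.1.
have Gsym a b : G b a = G a b by rewrite -{1}sG mxE.
have pG' : psd G'.
  split.
    by apply/matrixP => a b; rewrite !mxE Gsym; congr (_ - _); ring.
  move=> x; rewrite -/(qf G' x) qfE.
  have H := psd_quad x (ev p) (- (bf G x (ev p)) / c) pG.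
  rewrite bf_ev -/c in H.
  set B := bf G x (ev p) in H.
  have -> : bf G' x x = bf G x x - c^-1 * B ^+ 2.
    rewrite /B bf_evr /bf expr2 big_distrr /= big_distrr /= -sumrB.
    apply: eq_bigr => i _.
    rewrite big_distrl big_distrr /= -sumrB; apply: eq_bigr => j _.
    rewrite !mxE Gsym; ring.
  suff -> : bf G x x - c^-1 * B ^+ 2 =
    bf G x x + 2 * (- B / c) * B + (- B / c) ^+ 2 * c by [].
  by field; rewrite gt_eqF.
have -> : \sum_a \sum_b G a b * M a b =
  \sum_a \sum_b G' a b * M a b + c^-1 * qf M gv.
  rewrite qfE /bf big_distrr -big_split /=; apply: eq_bigr => a _.
  rewrite big_distrr -big_split /=; apply: eq_bigr => b _.
  rewrite !mxE; ring.
apply: addr_ge0; last by apply: mulr_ge0; [rewrite invr_ge0 ltW|apply: pM].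
apply: IH => //.
rewrite -ltnS; apply: leq_trans Hk; rewrite ltnS; apply: proper_card.
apply/properP; split.
  apply/fintype.subsetP => a; rewrite !inE; apply: contraNN => /eqP Gaa.
  by rewrite mxE Gaa (psd_zero_row p pG Gaa) mulr0 subr0.
exists p; first by rewrite inE.
rewrite inE mxE negbK -/c; apply/eqP; field; rewrite gt_eqF //.
Qed.

End Frob.
Section Psd.
Variable R : realType.

Lemma bf_lin N (A B : 'M[R]_N) a x y : bf (a *: A + B) x y = a * bf A x y + bf B x y.
Proof.
rewrite /bf big_distrr -big_split; apply: eq_bigr => i _.
rewrite big_distrr -big_split; apply: eq_bigr => j _; rewrite !mxE /=; ring.
Qed.

Lemma qf_lin N (A B : 'M[R]_N) a x : qf (a *: A + B) x = a * qf A x + qf B x.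
Proof. by rewrite !qfE bf_lin. Qed.

Lemma psd_lin N (A B : 'M[R]_N) a : 0 <= a -> psd A -> psd B -> psd (a *: A + B).
Proof.
move=> a0 [sA pA] [sB pB]; split; first by rewrite linearD linearZ /= sA sB.
move=> x; rewrite -/(qf _ x) qf_lin; apply: addr_ge0; last exact: pB.
by apply: mulr_ge0 => //; apply: pA.
Qed.

Lemma psd0 N : psd (0 : 'M[R]_N).
Proof.
split; first exact: trmx0.
by move=> x; rewrite mulmx0 mul0mx mxE.
Qed.

Lemma psdD N (A B : 'M[R]_N) : psd A -> psd B -> psd (A + B).
Proof. by move=> pA pB; have := psd_lin ler01 pA pB; rewrite scale1r. Qed.

Lemma psdZ N (A : 'M[R]_N) a : 0 <= a -> psd A -> psd (a *: A).
Proof. by move=> a0 pA; have := psd_lin a0 pA (psd0 N); rewrite addr0. Qed.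

Lemma psd_xxT N (x : 'cV[R]_N) : psd (x *m x^T).
Proof.
split; first by rewrite trmx_mul trmxK.
move=> z; rewrite -/(qf _ z) qfE /bf.
have -> : \sum_i \sum_j z i 0 * (x *m x^T) i j * z j 0 =
  (\sum_i z i 0 * x i 0) ^+ 2.
  rewrite expr2 big_distrl; apply: eq_bigr => i _ /=.
  rewrite big_distrr; apply: eq_bigr => j _ /=.
  rewrite !mxE big_ord1 !mxE; ring.
exact: sqr_ge0.
Qed.

Lemma psd1 N : psd (1%:M : 'M[R]_N).
Proof.
split; first by rewrite trmx1.
move=> z; rewrite -/(qf _ z) qfE /bf; apply: sumr_ge0 => i _.
rewrite (bigD1 i) //= big1 ?addr0; last first.
  by move=> j /negbTE ji; rewrite mxE eq_sym ji mulr0 mul0r.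
by rewrite mxE eqxx mulr1 -expr2 sqr_ge0.
Qed.

Lemma pd_1psd N (A : 'M[R]_N) : psd A -> pd (1%:M + A).
Proof.
move=> [sA pA]; split; first by rewrite linearD /= trmx1 sA.
move=> x x0; have := @qf_lin N 1%:M A 1 x; rewrite scale1r mul1r => /= H; rewrite -/(qf _ x) H.
have HA : 0 <= qf A x := pA x.
suff H1 : 0 < qf 1%:M x by lra.
rewrite qfE /bf.
have [i xi] : exists i, x i 0 != 0.
  have [//|nex] := pselect (exists i, x i 0 != 0).
  exfalso; move/negP: x0; apply; apply/eqP/matrixP => i j.
  rewrite (ord1 j) mxE; apply/eqP/negPn/negP => Hx; apply: nex; by exists i.
have term j : \sum_k x j 0 * (1%:M : 'M[R]_N) j k * x k 0 = x j 0 ^+ 2.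
  rewrite (bigD1 j) //= big1 ?addr0; last first.
    by move=> k /negbTE kj; rewrite mxE eq_sym kj mulr0 mul0r.
  by rewrite mxE eqxx mulr1 -expr2.
under eq_bigr do rewrite term.
rewrite (bigD1 i) //=; apply: ltr_pwDl.
  by rewrite lt_def sqrf_eq0 xi sqr_ge0.
by apply: sumr_ge0 => j _; rewrite sqr_ge0.
Qed.

Lemma psd_pd N (A : 'M[R]_N) : pd A -> psd A.
Proof.
move=> [sA pA]; split => // x; case: (eqVneq x 0) => [->|x0].
  by rewrite !mulmx0 mxE.
exact/ltW/pA.
Qed.

End Psd.
Section Poly.
Variables (R : realType) (n : nat).
Implicit Types (p q : {mpoly R[n]}).

Definition deg_le p (K : nat) : bool := all (fun a => mdeg a <= K)%N (msupp p).

Lemma deg_leP p K : reflect (forall a, a \in msupp p -> (mdeg a <= K)%N) (deg_le p K).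
Proof. exact: allP. Qed.

Lemma deg_le_mono p K K' : deg_le p K -> (K <= K')%N -> deg_le p K'.
Proof. by move=> /deg_leP dp le; apply/deg_leP => a /dp /leq_trans; apply. Qed.

Lemma deg_le0 K : deg_le 0 K.
Proof. by rewrite /deg_le msupp0. Qed.

Lemma deg_leD p q K : deg_le p K -> deg_le q K -> deg_le (p + q) K.
Proof.
move=> /deg_leP dp /deg_leP dq; apply/deg_leP => a /msuppD_le.
by rewrite mem_cat => /orP[/dp|/dq].
Qed.

Lemma deg_leZ c p K : deg_le p K -> deg_le (c *: p) K.
Proof. by move=> /deg_leP dp; apply/deg_leP => a /msuppZ_le /dp. Qed.

Lemma deg_leN p K : deg_le p K -> deg_le (- p) K.
Proof. by move=> /deg_leP dp; apply/deg_leP => a; rewrite (perm_mem (msuppN p)) => /dp. Qed.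

Lemma deg_leB p q K : deg_le p K -> deg_le q K -> deg_le (p - q) K.
Proof. by move=> dp dq; apply: deg_leD => //; apply: deg_leN. Qed.

Lemma deg_le_sum (I : Type) (r : seq I) (P : pred I) (F : I -> {mpoly R[n]}) K :
  (forall i, P i -> deg_le (F i) K) -> deg_le (\sum_(i <- r | P i) F i) K.
Proof.
move=> H; elim/big_rec: _ => [|i x Pi dx]; first exact: deg_le0.
by apply: deg_leD => //; apply: H.
Qed.

Lemma deg_leM p q K1 K2 : deg_le p K1 -> deg_le q K2 -> deg_le (p * q) (K1 + K2).
Proof.
move=> /deg_leP dp /deg_leP dq; apply/deg_leP.
move=> a /msuppM_le /allpairsP [[m1 m2] /= [i1 i2 ->]].
by rewrite mdegD leq_add // ?dp ?dq.
Qed.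

Lemma deg_leX m K : (mdeg m <= K)%N -> deg_le 'X_[m] K.
Proof. by move=> H; apply/deg_leP => a; rewrite msuppX mem_seq1 => /eqP ->. Qed.

Lemma deg_leC c K : deg_le c%:MP K.
Proof.
apply/deg_leP => a; rewrite msuppC; case: (c == 0) => //; rewrite mem_seq1 => /eqP ->.
by rewrite mdeg0.
Qed.

Lemma deg_le_size p K : (msize p <= K.+1)%N -> deg_le p K.
Proof.
by move=> H; apply/deg_leP => a /msize_mdeg_lt Ha; rewrite -ltnS; apply: leq_trans H.
Qed.

Lemma deg_le_hdeg p : deg_le p (2 * hdeg p)%N.
Proof.
apply: deg_le_size; rewrite /hdeg /pdeg.
case: (msize p) => [|s] //=.
rewrite ltnS uphalf_half; have := odd_double_half s.
case: (odd s) => /= H; lia.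
Qed.

Lemma mon_deg d (a : 'I_(sdim n d)) : (mdeg (mon a) <= d)%N.
Proof. by rewrite /mon -ltnS bmdeg. Qed.

Lemma mon_surj d m : (mdeg m <= d)%N -> exists a : 'I_(sdim n d), mon a = m.
Proof.
rewrite -ltnS => H.
pose x : 'X_{1..n < d.+1} := BMultinom H.
by exists (enum_rank x); rewrite /mon enum_rankK.
Qed.

Lemma sub_mnm (al : 'X_{1..n}) t : (t <= mdeg al)%N ->
  exists be : 'X_{1..n}, (be <= al)%MM /\ mdeg be = t.
Proof.
elim: t => [|t IH] H.
  by exists 0%MM; split; [apply/mnm_lepP => i; rewrite mnm0E|rewrite mdeg0].
have [be [le dbe]] := IH (ltnW H).
have [i lti] : exists i, (be i < al i)%N.
  have [//|nex] := pselect (exists i, (be i < al i)%N).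
  have : (mdeg al <= mdeg be)%N.
    rewrite !mdegE; apply: leq_sum => i _; rewrite leqNgt; apply/negP => lt.
    by apply: nex; exists i.
  lia.
exists (be + U_(i))%MM; split; last by rewrite mdegD mdeg1 dbe addn1.
apply/mnm_lepP => j; rewrite mnmDE mnm1E.
case: eqP => [<-|_]; first by rewrite addn1.
by rewrite addn0; move/mnm_lepP: le.
Qed.

End Poly.
Arguments deg_leX {R n m K}.
Section Poly2.
Variables (R : realType) (n : nat).
Implicit Types (p q : {mpoly R[n]}) (y : 'X_{1..n} -> R).

Lemma mon_split d (al : 'X_{1..n}) : (mdeg al <= 2 * d)%N ->
  exists a b : 'I_(sdim n d), (mon a + mon b)%MM = al.
Proof.
move=> H.
have [be [le dbe]] := @sub_mnm n al (minn d (mdeg al)) (geq_minr _ _).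
have E := submK le.
have dga : (mdeg (al - be)%MM <= d)%N.
  have := f_equal (@mdeg n) E; rewrite mdegD dbe; lia.
have dbe' : (mdeg be <= d)%N by rewrite dbe geq_minl.
have [a Ha] := mon_surj dbe'.
have [b Hb] := mon_surj dga.
by exists a, b; rewrite Ha Hb addmC.
Qed.

Lemma gram_lin d (a : R) (G H : 'M[R]_(sdim n d)) :
  gram (a *: G + H) = a *: gram G + gram H.
Proof.
rewrite /gram scaler_sumr -big_split; apply: eq_bigr => i _ /=.
rewrite scaler_sumr -big_split; apply: eq_bigr => j _ /=.
by rewrite !mxE scalerDl scalerA.
Qed.

Lemma gram0 d : gram (0 : 'M[R]_(sdim n d)) = 0.
Proof.
by rewrite /gram big1 // => i _; rewrite big1 // => j _; rewrite mxE scale0r.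
Qed.

Lemma gramD d (G H : 'M[R]_(sdim n d)) : gram (G + H) = gram G + gram H.
Proof. by have := gram_lin 1 G H; rewrite !scale1r. Qed.

Lemma gramZ d a (G : 'M[R]_(sdim n d)) : gram (a *: G) = a *: gram G.
Proof. by have := gram_lin a G 0; rewrite !addr0 gram0 addr0. Qed.

Lemma lin_lin d (a : R) (u v : 'cV[R]_(sdim n d)) :
  lin (a *: u + v) = a *: lin u + lin v.
Proof.
rewrite /lin scaler_sumr -big_split; apply: eq_bigr => i _ /=.
by rewrite !mxE scalerDl scalerA.
Qed.

Lemma lin0 d : lin (0 : 'cV[R]_(sdim n d)) = 0.
Proof. by rewrite /lin big1 // => i _; rewrite mxE scale0r. Qed.

Lemma gram_sq d (x : 'cV[R]_(sdim n d)) :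
  gram (x *m x^T) = (\sum_a x a 0 *: 'X_[mon a]) ^+ 2.
Proof.
rewrite /gram expr2 big_distrl; apply: eq_bigr => a _ /=.
rewrite big_distrr; apply: eq_bigr => b _ /=.
rewrite !mxE big_ord1 !mxE -scalerAl -scalerAr scalerA mpolyXD.
by [].
Qed.

Lemma gram_deg d (G : 'M[R]_(sdim n d)) : deg_le (gram G) (2 * d)%N.
Proof.
apply: deg_le_sum => a _; apply: deg_le_sum => b _; apply: deg_leZ.
by apply: deg_leX; rewrite mdegD; have := mon_deg a; have := mon_deg b; lia.
Qed.

Lemma lin_deg d (u : 'cV[R]_(sdim n d)) : deg_le (lin u) d.
Proof. by apply: deg_le_sum => a _; apply: deg_leZ; apply: deg_leX; apply: mon_deg. Qed.

Lemma LyE (y : 'X_{1..n} -> R) p K : (msize p <= K)%N ->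
  Ly y p = \sum_(m : 'X_{1..n < K}) p@_m * y m.
Proof.
move=> lt_pk; pose I : subFinType _ := 'X_{1..n < K}.
rewrite /Ly (big_mksub I) //=; first last.
  by move=> x /msize_mdeg_lt /leq_trans; apply.
  by rewrite msupp_uniq.
by rewrite big_rmcond //= => i; move/memN_msupp_eq0 ->; rewrite mul0r.
Qed.

Lemma Ly_lin y (a : R) p q : Ly y (a *: p + q) = a * Ly y p + Ly y q.
Proof.
pose K := maxn (msize p) (msize q).
have hp : (msize p <= K)%N by rewrite leq_maxl.
have hq : (msize q <= K)%N by rewrite leq_maxr.
have hpq : (msize (a *: p + q) <= K)%N.
  apply: leq_trans (msizeD_le _ _) _; rewrite geq_max hq andbT.
  exact: leq_trans (msizeZ_le _ _) hp.
rewrite (LyE _ hp) (LyE _ hq) (LyE _ hpq) big_distrr -big_split /=.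
by apply: eq_bigr => i _; rewrite mcoeffD mcoeffZ mulrDl mulrA.
Qed.

Lemma Ly0 y : Ly y 0 = 0.
Proof. by rewrite /Ly msupp0 big_nil. Qed.

Lemma LyD y p q : Ly y (p + q) = Ly y p + Ly y q.
Proof. by have := Ly_lin y 1 p q; rewrite scale1r mul1r. Qed.

Lemma LyZ y a p : Ly y (a *: p) = a * Ly y p.
Proof. by have := Ly_lin y a p 0; rewrite !addr0 Ly0 addr0. Qed.

Lemma LyN y p : Ly y (- p) = - Ly y p.
Proof. by rewrite -scaleN1r LyZ mulN1r. Qed.

Lemma LyB y p q : Ly y (p - q) = Ly y p - Ly y q.
Proof. by rewrite LyD LyN. Qed.

Lemma Ly_sum y (I : Type) (r : seq I) (P : pred I) (F : I -> {mpoly R[n]}) :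
  Ly y (\sum_(i <- r | P i) F i) = \sum_(i <- r | P i) Ly y (F i).
Proof.
by apply: (big_morph (Ly y)); [move=> p q; rewrite LyD | rewrite Ly0].
Qed.

Lemma LyX y c m : Ly y (c *: 'X_[m]) = c * y m.
Proof.
have [->|c0] := eqVneq c 0; first by rewrite scale0r Ly0 mul0r.
by rewrite /Ly msuppMCX // big_seq1 mcoeffZ mcoeffX eqxx mulr1.
Qed.

Lemma LyC y c : Ly y c%:MP = c * y 0%MM.
Proof. by rewrite -LyX mpolyX0 -alg_mpolyC. Qed.

Lemma Ly_shift y p m : Ly y (p * 'X_[m]) = Ly (fun c => y (m + c)%MM) p.
Proof.
rewrite /Ly (perm_big _ (msuppMX p m)) big_map; apply: eq_bigr => c _.
by rewrite mcoeffMX.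
Qed.

End Poly2.
Arguments deg_le_hdeg {R n} p.
Arguments gram_deg {R n d} G.
Arguments lin_deg {R n d} u.
Section Ball.
Variables (R : realType) (n : nat) (Rad : R) (k d : nat) (b : {mpoly R[n]}).
Hypotheses (Rpos : 0 < Rad) (Hb : b = Rad%:MP - \sum_(t < n) 'X_t ^+ 2)
  (Hd1 : (k <= d.+1)%N) (Hd0 : (d <= k)%N) (Hd2 : (0 < n)%N -> (d < k)%N).

Definition Kc (p : {mpoly R[n]}) := exists (G0 : 'M[R]_(sdim n k)) (G1 : 'M[R]_(sdim n d)),
  [/\ psd G0, psd G1 & p = gram G0 + b * gram G1].

Lemma Kc0 : Kc 0.
Proof. by exists 0, 0; split; try apply: psd0; rewrite !gram0 mulr0 addr0. Qed.

Lemma Kc_lin a p q : 0 <= a -> Kc p -> Kc q -> Kc (a *: p + q).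
Proof.
move=> a0 [G0 [G1 [p0 p1 ->]]] [H0 [H1 [q0 q1 ->]]].
exists (a *: G0 + H0), (a *: G1 + H1); split; try by apply: psd_lin.
rewrite !gram_lin scalerDr mulrDr -scalerAr; ring.
Qed.

Lemma KcD p q : Kc p -> Kc q -> Kc (p + q).
Proof. by move=> ? ?; rewrite -[p]scale1r; apply: Kc_lin. Qed.

Lemma KcZ a p : 0 <= a -> Kc p -> Kc (a *: p).
Proof. by move=> ? ?; rewrite -[_ *: _]addr0; apply: Kc_lin => //; apply: Kc0. Qed.

Lemma Kc_sum (I : Type) (r : seq I) (P : pred I) F :
  (forall i, P i -> Kc (F i)) -> Kc (\sum_(i <- r | P i) F i).
Proof.
move=> H; elim/big_rec: _ => [|i x Pi dx]; first exact: Kc0.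
by apply: KcD => //; apply: H.
Qed.

Lemma Kc_sq0 (x : 'cV[R]_(sdim n k)) : Kc ((\sum_a x a 0 *: 'X_[mon a]) ^+ 2).
Proof.
exists (x *m x^T), 0; split; [exact: psd_xxT|exact: psd0|].
by rewrite gram_sq gram0 mulr0 addr0.
Qed.

Lemma Kc_sq1 (x : 'cV[R]_(sdim n d)) : Kc (b * (\sum_a x a 0 *: 'X_[mon a]) ^+ 2).
Proof.
exists 0, (x *m x^T); split; [exact: psd0|exact: psd_xxT|].
by rewrite gram_sq gram0 add0r.
Qed.

Lemma sum_ev N (a : 'I_N) (F : 'I_N -> {mpoly R[n]}) :
  \sum_i (ev a : 'cV[R]_N) i 0 *: F i = F a.
Proof.
rewrite (bigD1 a) //= big1 ?addr0; first by rewrite mxE eqxx scale1r.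
by move=> i /negbTE H; rewrite mxE H scale0r.
Qed.

Lemma sum_ev2 N (a1 a2 : 'I_N) c (F : 'I_N -> {mpoly R[n]}) :
  \sum_i (ev a1 - c *: ev a2 : 'cV[R]_N) i 0 *: F i = F a1 - c *: F a2.
Proof.
rewrite -(sum_ev a1 F) -(sum_ev a2 F) scaler_sumr -sumrB.
by apply: eq_bigr => i _; rewrite !mxE scalerBl scalerA.
Qed.

Lemma Kc_mono m : (mdeg m <= k)%N -> Kc 'X_[m + m].
Proof.
move=> /mon_surj [a <-]; have := Kc_sq0 (ev a).
by rewrite sum_ev mpolyXD expr2.
Qed.

Lemma Kc_bmono m : (mdeg m <= d)%N -> Kc (b * 'X_[m + m]).
Proof.
move=> /mon_surj [a <-]; have := Kc_sq1 (ev a).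
by rewrite sum_ev mpolyXD expr2.
Qed.

Lemma Kc_diff m1 m2 c : (mdeg m1 <= k)%N -> (mdeg m2 <= k)%N ->
  Kc (('X_[m1] - c *: 'X_[m2]) ^+ 2).
Proof.
move=> /mon_surj [a1 <-] /mon_surj [a2 <-].
by have := Kc_sq0 (ev a1 - c *: ev a2); rewrite sum_ev2.
Qed.


Lemma Xsq_U m (s : 'I_n) :
  'X_s ^+ 2 * 'X_[m + m] = 'X_[(m + U_(s)) + (m + U_(s))] :> {mpoly R[n]}.
Proof. by rewrite !mpolyXD expr2; ring. Qed.

Lemma bound_sq j m : mdeg m = j -> (j <= k)%N -> Kc ((Rad ^+ j)%:MP - 'X_[m + m]).
Proof.
elim: j m => [|j IH] m dm jk.
  move/eqP: dm; rewrite mdeg_eq0 => /eqP ->; rewrite addm0 mpolyX0 expr0.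
  by rewrite mpolyC1 subrr; apply: Kc0.
have [t mt] : exists t, (0 < m t)%N.
  have [//|nex] := pselect (exists t, (0 < m t)%N).
  have : mdeg m = 0%N.
    rewrite mdegE big1 // => i _; apply/eqP; rewrite -leqn0 leqNgt.
    by apply/negP => H; apply: nex; exists i.
  by rewrite dm.
have le : (U_(t) <= m)%MM by rewrite lep1mP -lt0n.
have E := submK le; set m' := (m - U_(t))%MM in E.
have dm' : mdeg m' = j by have := f_equal (@mdeg n) E; rewrite mdegD mdeg1 dm; lia.
have -> : (Rad ^+ j.+1)%:MP - 'X_[m + m] =
  Rad *: ((Rad ^+ j)%:MP - 'X_[m' + m']) + b * 'X_[m' + m'] +
  \sum_(s < n | s != t) 'X_[(m' + U_(s)) + (m' + U_(s))].
  rewrite Hb -E (bigD1 t) //= mulrDl.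
  under [X in _ = _ + X]eq_bigr do rewrite -Xsq_U.
  rewrite -big_distrl /= -mul_mpolyC exprS mpolyCM.
  rewrite !mpolyXD; ring.
apply: KcD; first apply: KcD.
- by apply: KcZ; [exact: ltW|apply: IH => //; lia].
- by apply: Kc_bmono; lia.
- by apply: Kc_sum => s _; apply: Kc_mono; rewrite mdegD mdeg1; lia.
Qed.


Lemma gram1 e : gram (1%:M : 'M[R]_(sdim n e)) = \sum_(a : 'I_(sdim n e)) 'X_[mon a + mon a].
Proof.
apply: eq_bigr => a _; rewrite (bigD1 a) //= big1 ?addr0.
  by rewrite mxE eqxx scale1r.
by move=> i /negbTE H; rewrite mxE eq_sym H scale0r.
Qed.

Lemma margin : exists M : R,
  Kc (M%:MP - gram (1%:M : 'M[R]_(sdim n k)) - b * gram (1%:M : 'M[R]_(sdim n d))).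
Proof.
exists ((\sum_(a : 'I_(sdim n k)) Rad ^+ mdeg (mon a)) +
        \sum_(a : 'I_(sdim n d)) Rad * Rad ^+ mdeg (mon a)).
rewrite !gram1.
have E1 : \sum_(a : 'I_(sdim n k)) ((Rad ^+ mdeg (mon a))%:MP - 'X_[mon a + mon a]) =
  (\sum_(a : 'I_(sdim n k)) Rad ^+ mdeg (mon a))%:MP - \sum_(a : 'I_(sdim n k)) 'X_[mon a + mon a].
  by rewrite sumrB rmorph_sum.
have E2 : \sum_(a : 'I_(sdim n d)) (Rad *: ((Rad ^+ mdeg (mon a))%:MP - 'X_[mon a + mon a])
     + \sum_(s < n) 'X_[(mon a + U_(s)) + (mon a + U_(s))]) =
  (\sum_(a : 'I_(sdim n d)) Rad * Rad ^+ mdeg (mon a))%:MP - b * \sum_(a : 'I_(sdim n d)) 'X_[mon a + mon a].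
  rewrite rmorph_sum mulr_sumr -sumrB; apply: eq_bigr => c _.
  under eq_bigr do rewrite -Xsq_U.
  rewrite -big_distrl Hb -mul_mpolyC /= rmorphM /=; ring.
have -> : forall (M1 M2 : R) (S1 S2 : {mpoly R[n]}),
   (M1 + M2)%:MP - S1 - b * S2 = (M1%:MP - S1) + (M2%:MP - b * S2).
  by move=> M1 M2 S1 S2; rewrite rmorphD /=; ring.
rewrite -E1 -E2; apply: KcD; apply: Kc_sum => a _.
  by apply: (bound_sq (refl_equal _)); apply: mon_deg.
apply: KcD.
  apply: KcZ; first exact: ltW.
  by apply: (bound_sq (refl_equal _)); apply: leq_trans (mon_deg a) Hd0.
apply: Kc_sum => s _; apply: Kc_mono; rewrite mdegD mdeg1.
have : (0 < n)%N by case: s => s /=; case: n.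
by move/Hd2; have := mon_deg a; lia.
Qed.

Lemma bound_mono c al : (mdeg al <= 2 * k)%N -> exists T : R, Kc (T%:MP - c *: 'X_[al]).
Proof.
move=> /mon_split [a1 [a2 <-]].
set m1 := mon a1; set m2 := mon a2.
pose c' := c / 2.
exists (Rad ^+ mdeg m1 + c' ^+ 2 * Rad ^+ mdeg m2).
have -> : c = 2 * c' by rewrite /c'; field.
have -> : (Rad ^+ mdeg m1 + c' ^+ 2 * Rad ^+ mdeg m2)%:MP - (2 * c') *: 'X_[m1 + m2] =
  ((Rad ^+ mdeg m1)%:MP - 'X_[m1 + m1]) + c' ^+ 2 *: ((Rad ^+ mdeg m2)%:MP - 'X_[m2 + m2])
  + ('X_[m1] - c' *: 'X_[m2]) ^+ 2.
  rewrite -!mul_mpolyC !mpolyXD rmorphD /= !rmorphM /= !rmorphXn /=.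
  ring.
apply: KcD; first apply: KcD.
- by apply: (bound_sq (refl_equal _)); apply: mon_deg.
- by apply: KcZ; [exact: sqr_ge0|apply: (bound_sq (refl_equal _)); apply: mon_deg].
- by apply: Kc_diff; apply: mon_deg.
Qed.

Lemma bound_list (I : eqType) (r : seq I) (F : I -> {mpoly R[n]}) :
  (forall i, i \in r -> exists T : R, Kc (T%:MP - F i)) ->
  exists T : R, Kc (T%:MP - \sum_(i <- r) F i).
Proof.
elim: r => [|i r IH] H.
  by exists 0; rewrite big_nil subrr; apply: Kc0.
have [T1 K1] := H i (mem_head _ _).
have [T2 K2] : exists T : R, Kc (T%:MP - \sum_(j <- r) F j).
  by apply: IH => j Hj; apply: H; rewrite inE Hj orbT.
exists (T1 + T2); rewrite big_cons.
have -> : (T1 + T2)%:MP - (F i + \sum_(j <- r) F j) =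
  (T1%:MP - F i) + (T2%:MP - \sum_(j <- r) F j) by rewrite rmorphD /=; ring.
exact: KcD.
Qed.

Lemma bound_poly p : deg_le p (2 * k)%N -> exists T : R, Kc (T%:MP - p).
Proof.
move=> dp.
suff : exists T : R, Kc (T%:MP - \sum_(m <- msupp p) p@_m *: 'X_[m]).
  by rewrite -mpolyE.
apply: bound_list => al Hal.
by apply: bound_mono; move/deg_leP: dp; apply.
Qed.

End Ball.
Local Open Scope classical_set_scope.
Section Riesz.
Variables (R : realType) (V : lmodType R) (C : V -> Prop) (e : V).
Hypotheses (C0 : C 0)
  (Clin : forall a x y, 0 <= a -> C x -> C y -> C (a *: x + y)).

Definition subsp (W : V -> Prop) := W 0 /\ forall a x y, W x -> W y -> W (a *: x + y).
Definition lin_on (W : V -> Prop) (phi : V -> R) :=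
  forall a x y, W x -> W y -> phi (a *: x + y) = a * phi x + phi y.
Definition pos_on (W : V -> Prop) (phi : V -> R) := forall x, W x -> C x -> 0 <= phi x.
Definition ounit v := (exists t, C (t *: e - v)) /\ (exists t, C (v + t *: e)).
Definition ext (W : V -> Prop) v := fun x => exists w s, W w /\ x = w + s *: v.
Definition lowset (W : V -> Prop) (phi : V -> R) v : set R :=
  fun z => exists w, [/\ W w, C (v - w) & z = phi w].

Section Facts.
Variables (W : V -> Prop) (phi : V -> R) (sW : subsp W) (lW : lin_on W phi).

Lemma sW0 : W 0. Proof. exact: sW.1. Qed.
Lemma sWD x y : W x -> W y -> W (x + y).
Proof. by move=> ? ?; rewrite -[x]scale1r; apply: sW.2. Qed.
Lemma sWZ a x : W x -> W (a *: x).
Proof. by move=> ?; rewrite -[_ *: _]addr0; apply: sW.2 => //; apply: sW0. Qed.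
Lemma sWN x : W x -> W (- x).
Proof. by move=> ?; rewrite -scaleN1r; apply: sWZ. Qed.
Lemma sWB x y : W x -> W y -> W (x - y).
Proof. by move=> ? ?; apply: sWD => //; apply: sWN. Qed.

Lemma phi0 : phi 0 = 0.
Proof.
have := lW 1 sW0 sW0; rewrite scale1r addr0 mul1r => H; lra.
Qed.
Lemma phiD x y : W x -> W y -> phi (x + y) = phi x + phi y.
Proof. by move=> ? ?; rewrite -[x]scale1r lW // mul1r scale1r. Qed.
Lemma phiZ a x : W x -> phi (a *: x) = a * phi x.
Proof. by move=> ?; rewrite -[_ *: _]addr0 lW ?phi0 ?addr0 //; apply: sW0. Qed.
Lemma phiN x : W x -> phi (- x) = - phi x.
Proof. by move=> ?; rewrite -scaleN1r phiZ // mulN1r. Qed.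
Lemma phiB x y : W x -> W y -> phi (x - y) = phi x - phi y.
Proof. by move=> ? ?; rewrite phiD ?phiN //; apply: sWN. Qed.

Lemma lin_sum (I : eqType) (r : seq I) (P : pred I) (c : I -> R) (F : I -> V) :
  (forall i, i \in r -> W (F i)) ->
  W (\sum_(i <- r | P i) c i *: F i) /\
  phi (\sum_(i <- r | P i) c i *: F i) = \sum_(i <- r | P i) c i * phi (F i).
Proof.
elim: r => [|i r IH] HF.
  by rewrite !big_nil phi0; split => //; apply: sW0.
have HF' : forall j, j \in r -> W (F j) by move=> j Hj; apply: HF; rewrite inE Hj orbT.
have [IH1 IH2] := IH HF'.
have Wi : W (F i) by apply: HF; rewrite mem_head.
rewrite !big_cons; case: (P i) => //; split; first by apply: sW.2.
by rewrite lW // IH2.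
Qed.

Lemma lin_sumW (I : eqType) (r : seq I) (P : pred I) (F : I -> V) :
  (forall i, i \in r -> W (F i)) ->
  W (\sum_(i <- r | P i) F i) /\
  phi (\sum_(i <- r | P i) F i) = \sum_(i <- r | P i) phi (F i).
Proof.
move=> HF; have := @lin_sum I r P (fun=> 1) F HF.
by under eq_bigr do rewrite scale1r; under [X in _ = X]eq_bigr do rewrite mul1r.
Qed.

End Facts.

Lemma subsp_ext W v : subsp W -> subsp (ext W v).
Proof.
move=> sW; split; first by exists 0, 0; rewrite scale0r addr0; split => //; exact: (sW0 sW).
move=> a x y [w1 [s1 [W1 ->]]] [w2 [s2 [W2 ->]]].
exists (a *: w1 + w2), (a * s1 + s2); split; first by apply: sW.2.
by rewrite scalerDr scalerDl scalerA addrACA.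
Qed.

Lemma riesz_step W phi v : subsp W -> lin_on W phi -> pos_on W phi -> W e ->
  ounit v -> exists phi',
  [/\ lin_on (ext W v) phi', pos_on (ext W v) phi',
      forall x, W x -> phi' x = phi x & phi' v = sup (lowset W phi v)].
Proof.
move=> sW lW pW We [[t1 Ht1] [t2 Ht2]].
set L := lowset W phi v; set c := sup L.
have ub w' z : W w' -> C (w' - v) -> L z -> z <= phi w'.
  move=> Ww' Cw' [w [Ww Cw ->]].
  have Cww : C (w' - w).
    have -> : w' - w = 1 *: (w' - v) + (v - w) by rewrite scale1r addrA subrK.
    by apply: Clin.
  have := pW _ (sWB sW Ww' Ww) Cww; rewrite (phiB sW lW) //; lra.
have L0 : L !=set0.
  exists (phi (- t2 *: e)), (- t2 *: e); split => //; first by apply: (sWZ sW).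
  by rewrite scaleNr opprK.
have Lub : has_ubound L.
  exists (phi (t1 *: e)) => z Lz; apply: ub => //; first by apply: (sWZ sW).
have cge z : L z -> z <= c by move=> Lz; apply: sup_upper_bound => //; split.
have cle w' : W w' -> C (w' - v) -> c <= phi w'.
  by move=> Ww' Cw'; apply: ge_sup => // z Lz; apply: ub.
have [Wv|nWv] := pselect (W v).
  have extW x : ext W v x -> W x.
    by move=> [w [s [Ww ->]]]; apply: (sWD sW) => //; apply: (sWZ sW).
  exists phi; split => //.
  - by move=> a x y /extW Wx /extW Wy; apply: lW.
  - by move=> x /extW Wx; apply: pW.
  apply/eqP; rewrite eq_le; apply/andP; split.
    by apply: cge; exists v; split => //; rewrite subrr.
  by apply: cle => //; rewrite subrr.
have uniq w1 w2 s1 s2 : W w1 -> W w2 -> w1 + s1 *: v = w2 + s2 *: v -> w1 = w2 /\ s1 = s2.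
  move=> W1 W2 E.
  have Es : s1 = s2.
    apply/eqP; apply/negPn/negP => ne; apply: nWv.
    have -> : v = (s1 - s2)^-1 *: (w2 - w1).
      apply: (@scalerI _ _ (s1 - s2)); first by rewrite subr_eq0.
      rewrite scalerA mulfV ?subr_eq0 // scale1r scalerBl.
      have -> : w2 = w1 + s1 *: v - s2 *: v by rewrite E addrK.
      by rewrite addrAC [w1 + _ - w1]addrAC subrr add0r.
    by apply: (sWZ sW); apply: (sWB sW).
  by split => //; move: E; rewrite Es => /addIr.
have [dec Hdec] : {dec : V -> V * R &
    forall x, ext W v x -> W (dec x).1 /\ x = (dec x).1 + (dec x).2 *: v}.
  apply: (@choice V (V * R)%type (fun x p => ext W v x -> W p.1 /\ x = p.1 + p.2 *: v)) => x.
  have [[w [s [Ww ->]]]|nx] := pselect (ext W v x); last by exists (0, 0).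
  by exists (w, s).
pose phi' x := phi (dec x).1 + (dec x).2 * c.
have phi'E w s : W w -> phi' (w + s *: v) = phi w + s * c.
  move=> Ww; have ex : ext W v (w + s *: v) by exists w, s.
  have [W1 E1] := Hdec _ ex.
  rewrite /phi'; have [-> ->] := uniq _ _ _ _ W1 Ww (esym E1).
  by [].
exists phi'; split.
- move=> a x y [w1 [s1 [W1 ->]]] [w2 [s2 [W2 ->]]].
  have -> : a *: (w1 + s1 *: v) + (w2 + s2 *: v) = (a *: w1 + w2) + (a * s1 + s2) *: v.
    by rewrite scalerDr scalerDl scalerA addrACA.
  rewrite !phi'E //; last by apply: sW.2.
  rewrite lW //; ring.
- move=> x [w [s [Ww ->]]] Cx; rewrite phi'E //.
  move: Cx; have [sneg|spos|->] := ltgtP s 0; move=> Cx.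
  + have Ww' : W ((- s)^-1 *: w) by apply: (sWZ sW).
    have Cw' : C ((- s)^-1 *: w - v).
      have -> : (- s)^-1 *: w - v = (- s)^-1 *: (w + s *: v) + 0.
        rewrite addr0 scalerDr scalerA.
        have -> : (- s)^-1 * s = -1 by rewrite invrN mulNr mulVf ?lt_eqF.
        by rewrite scaleN1r.
      by apply: Clin => //; rewrite invr_ge0 oppr_ge0 ltW.
    have := cle _ Ww' Cw'; rewrite (phiZ sW lW) //.
    have sp : 0 < - s by rewrite oppr_gt0.
    move=> H; have := ler_wpM2l (ltW sp) H.
    have -> : - s * ((- s)^-1 * phi w) = phi w by rewrite mulrA mulfV ?gt_eqF // mul1r.
    lra.
  + have Ww' : W (- s^-1 *: w) by apply: (sWZ sW).
    have Cw' : C (v - (- s^-1 *: w)).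
      have -> : v - (- s^-1 *: w) = s^-1 *: (w + s *: v) + 0.
        rewrite addr0 scalerDr scalerA mulVf ?gt_eqF // scale1r scaleNr opprK addrC.
        by [].
      by apply: Clin => //; rewrite invr_ge0 ltW.
    have := cge _ (ex_intro _ _ (And3 Ww' Cw' erefl)); rewrite (phiZ sW lW) // => H.
    have := ler_wpM2l (ltW spos) H.
    have -> : s * (- s^-1 * phi w) = - phi w.
      by rewrite mulNr mulrN mulrA mulfV ?gt_eqF // mul1r.
    lra.
  + by rewrite mul0r addr0; apply: pW => //; move: Cx; rewrite scale0r addr0.
- move=> x Wx; have := phi'E x 0 Wx; rewrite scale0r addr0 mul0r addr0.
  by [].
- have := phi'E 0 1 (sW0 sW); rewrite scale1r add0r (phi0 sW lW) mul1r add0r.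
  by [].
Qed.

Lemma riesz_list (s : seq V) : forall W phi, subsp W -> lin_on W phi -> pos_on W phi -> W e ->
  (forall v, v \in s -> ounit v) ->
  exists W' phi', [/\ subsp W', lin_on W' phi', pos_on W' phi',
     forall x, W x -> W' x /\ phi' x = phi x & forall v, v \in s -> W' v].
Proof.
elim: s => [|v s IH] W phi sW lW pW We Hs.
  by exists W, phi; split.
have [phi1 [l1 p1 a1 _]] := riesz_step sW lW pW We (Hs v (mem_head _ _)).
have sW1 := subsp_ext v sW.
have W1e : ext W v e by exists e, 0; rewrite scale0r addr0.
have Hs' : forall u, u \in s -> ounit u.
  by move=> u Hu; apply: Hs; rewrite inE Hu orbT.
have [W' [phi' [s' l' p' a' m']]] := IH _ _ sW1 l1 p1 W1e Hs'.
exists W', phi'; split => //.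
- move=> x Wx; have W1x : ext W v x by exists x, 0; rewrite scale0r addr0.
  by have [Wx' ->] := a' x W1x; split => //; apply: a1.
- move=> u; rewrite inE => /orP[/eqP ->|Hu]; last by apply: m'.
  by apply: (a' v _).1; exists 0, 1; rewrite scale1r add0r; split => //; exact: (sW0 sW).
Qed.

End Riesz.
Definition injT (I : eqType) (T : I -> Type) (D : forall i, T i) (j : I) (M : T j) :
  forall i, T i :=
  fun i => match i =P j with ReflectT e => eq_rect_r T M e | ReflectF _ => D i end.

Lemma injT_at (I : eqType) (T : I -> Type) D j M : @injT I T D j M j = M.
Proof.
rewrite /injT; case: eqP => // e.
by rewrite (eq_irrelevance e erefl).
Qed.

Lemma injT_ne (I : eqType) (T : I -> Type) D j M i : i != j -> @injT I T D j M i = D i.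
Proof. by rewrite /injT; case: eqP. Qed.

Lemma injT_prop (I : eqType) (T : I -> Type) (P : forall i, T i -> Prop) D j M :
  (forall i, P i (D i)) -> P j M -> forall i, P i (@injT I T D j M i).
Proof.
move=> HD HM i; rewrite /injT; case: eqP => // e.
by subst i.
Qed.

Lemma sum_injT (V : nmodType) (N : nat) (T : 'I_N -> Type)
    (F : forall i, T i -> V) D j M :
  \sum_i F i (@injT _ T D j M i) = F j M + \sum_(i | i != j) F i (D i).
Proof.
rewrite (bigD1 j) //= injT_at; congr (_ + _).
by apply: eq_bigr => i ij; rewrite injT_ne.
Qed.

Section Main.
Variables (R : realType) (n m l : nat) (f : {mpoly R[n]})
  (g : 'I_m -> {mpoly R[n]}) (h : 'I_l -> {mpoly R[n]}) (k : nat).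
Hypotheses (kk : (kmin f g h <= k)%N).

Local Notation Tg := (fun i : 'I_m => 'M[R]_(sdim n (k - hdeg (g i)))).
Local Notation Th := (fun j : 'I_l => 'cV[R]_(sdim n (2 * (k - hdeg (h j))))).

Definition Cc (p : {mpoly R[n]}) :=
  exists (G0 : 'M[R]_(sdim n k)) (G : forall i, Tg i) (u : forall j, Th j),
  [/\ psd G0, forall i, psd (G i) &
      p = gram G0 + \sum_i g i * gram (G i) + \sum_j h j * lin (u j)].

Lemma feasE xi : sos_feasible f g h k xi <-> Cc (f - xi%:MP).
Proof. by []. Qed.

Lemma Cc0 : Cc 0.
Proof.
exists 0, (fun i => 0), (fun j => 0); split; try by move=> *; apply: psd0.
rewrite gram0 big1 ?big1 ?addr0 // => i _; by rewrite ?gram0 ?lin0 mulr0.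
Qed.

Lemma Cc_lin a p q : 0 <= a -> Cc p -> Cc q -> Cc (a *: p + q).
Proof.
move=> a0 [G0 [G [u [p0 pG ->]]]] [H0 [H [v [q0 qH ->]]]].
exists (a *: G0 + H0), (fun i => a *: G i + H i), (fun j => a *: u j + v j).
split; first by apply: psd_lin.
  by move=> i; apply: psd_lin.
have E1 : \sum_i g i * gram (a *: G i + H i) =
    a *: (\sum_i g i * gram (G i)) + \sum_i g i * gram (H i).
  rewrite scaler_sumr -big_split; apply: eq_bigr => i _ /=.
  by rewrite gram_lin mulrDr scalerAr.
have E2 : \sum_j h j * lin (a *: u j + v j) =
    a *: (\sum_j h j * lin (u j)) + \sum_j h j * lin (v j).
  rewrite scaler_sumr -big_split; apply: eq_bigr => i _ /=.
  by rewrite lin_lin mulrDr scalerAr.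
rewrite gram_lin E1 E2 !scalerDr; ring.
Qed.

Lemma Cc_g j (M : 'M[R]_(sdim n (k - hdeg (g j)))) : psd M -> Cc (g j * gram M).
Proof.
move=> pM; exists 0, (@injT _ Tg (fun i => 0) j M), (fun j => 0); split.
- exact: psd0.
- by apply: (injT_prop (P := fun i (X : Tg i) => psd X)) => // i; apply: psd0.
rewrite gram0 add0r (sum_injT (fun i (X : Tg i) => g i * gram X)) /=.
rewrite big1 ?addr0; last by move=> i _; rewrite gram0 mulr0.
by rewrite big1 ?addr0 // => i _; rewrite lin0 mulr0.
Qed.

Lemma Cc_h j (v : 'cV[R]_(sdim n (2 * (k - hdeg (h j))))) : Cc (h j * lin v).
Proof.
exists 0, (fun i => 0), (@injT _ Th (fun j => 0) j v); split.
- exact: psd0.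
- by move=> i; apply: psd0.
rewrite gram0 add0r (sum_injT (fun i (X : Th i) => h i * lin X)) /=.
rewrite big1 ?add0r; last by move=> i _; rewrite gram0 mulr0.
by rewrite big1 ?addr0 // => i _; rewrite lin0 mulr0.
Qed.

Lemma Cc_gram (G0 : 'M[R]_(sdim n k)) : psd G0 -> Cc (gram G0).
Proof.
move=> p0; exists G0, (fun i => 0), (fun j => 0); split => //.
  by move=> i; apply: psd0.
by rewrite big1 ?big1 ?addr0 // => i _; rewrite ?gram0 ?lin0 mulr0.
Qed.

Lemma hdeg_f : (hdeg f <= k)%N.
Proof. by apply: leq_trans kk; rewrite /kmin leq_maxl. Qed.

Lemma hdeg_g i : (hdeg (g i) <= k)%N.
Proof.
apply: leq_trans kk; rewrite /kmin; apply: leq_trans (leq_maxr _ _).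
apply: leq_trans (leq_maxl _ _); exact: (@leq_bigmax _ (fun i : 'I_m => hdeg (g i)) i).
Qed.

Lemma hdeg_h j : (hdeg (h j) <= k)%N.
Proof.
apply: leq_trans kk; rewrite /kmin; apply: leq_trans (leq_maxr _ _).
apply: leq_trans (leq_maxr _ _); exact: (@leq_bigmax _ (fun j : 'I_l => hdeg (h j)) j).
Qed.

Lemma deg_f : deg_le f (2 * k)%N.
Proof. apply: (deg_le_mono (deg_le_hdeg f)); have := hdeg_f; lia. Qed.

Lemma deg_g i (G : Tg i) : deg_le (g i * gram G) (2 * k)%N.
Proof.
apply: (deg_le_mono (deg_leM (deg_le_hdeg (g i)) (gram_deg G))).
by have := hdeg_g i; lia.
Qed.

Lemma deg_h j (u : Th j) : deg_le (h j * lin u) (2 * k)%N.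
Proof.
apply: (deg_le_mono (deg_leM (deg_le_hdeg (h j)) (lin_deg u))).
by have := hdeg_h j; lia.
Qed.

Lemma deg_hX j (a : 'I_(sdim n (2 * (k - hdeg (h j))))) :
  deg_le (h j * 'X_[mon a]) (2 * k)%N.
Proof.
apply: (deg_le_mono (deg_leM (deg_le_hdeg (h j)) (deg_leX (mon_deg a)))).
by have := hdeg_h j; lia.
Qed.

End Main.
Section Main2.
Variables (R : realType) (n m l : nat) (f : {mpoly R[n]})
  (g : 'I_m -> {mpoly R[n]}) (h : 'I_l -> {mpoly R[n]}) (Rad : R) (k : nat) (i0 : 'I_m).
Hypotheses (Rpos : 0 < Rad) (kk : (kmin f g h <= k)%N)
  (gi0 : g i0 = Rad%:MP - \sum_(t < n) 'X_t ^+ 2).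

Local Notation Tg := (fun i : 'I_m => 'M[R]_(sdim n (k - hdeg (g i)))).
Local Notation Th := (fun j : 'I_l => 'cV[R]_(sdim n (2 * (k - hdeg (h j))))).
Local Notation d := (k - hdeg (g i0))%N.
Local Notation CC := (Cc g h k).

Lemma size_of_deg (p : {mpoly R[n]}) K : deg_le p K -> (msize p <= K.+1)%N.
Proof.
move=> /deg_leP dp; rewrite msizeE big_seq; apply: (big_ind (fun x => x <= K.+1)%N) => //.
  by move=> x y; rewrite geq_max => -> ->.
Qed.

Lemma ball_deg : deg_le (g i0) 2.
Proof.
rewrite gi0; apply: deg_leB; first exact: deg_leC.
apply: deg_le_sum => t _; rewrite mpolyXn; apply: deg_leX.
by rewrite mdegMn mdeg1.
Qed.

Lemma hdeg_ball_le : (hdeg (g i0) <= 1)%N.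
Proof.
have := size_of_deg ball_deg; rewrite /hdeg /pdeg.
case: (msize (g i0)) => [|[|[|[|s]]]] //.
Qed.

Lemma hdeg_ball_ge : (0 < n)%N -> (1 <= hdeg (g i0))%N.
Proof.
move=> np; pose t0 : 'I_n := Ordinal np.
pose al := (U_(t0) *+ 2)%MM.
have coef : (g i0)@_al = -1.
  rewrite gi0 mcoeffB mcoeffC.
  have -> : (al == 0%MM) = false.
    by apply/negbTE; rewrite -mdeg_eq0 /al mdegMn mdeg1.
  rewrite mulr0 sub0r raddf_sum /= (bigD1 t0) //= big1 ?addr0.
    by rewrite mpolyXn mcoeffX eqxx.
  move=> t tt0; rewrite mpolyXn mcoeffX; case: eqP => // /mnmP /(_ t0).
  by rewrite !mulmnE !mnm1E eqxx (negbTE tt0).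
have Hin : al \in msupp (g i0) by rewrite mcoeff_msupp coef oppr_eq0 oner_eq0.
have := msize_mdeg_lt Hin; rewrite /al mdegMn mdeg1 /hdeg /pdeg.
case: (msize (g i0)) => [|[|[|s]]] //.
Qed.

Lemma Hd1 : (k <= d.+1)%N.
Proof. by have := hdeg_ball_le; lia. Qed.
Lemma Hd0 : (d <= k)%N.
Proof. exact: leq_subr. Qed.
Lemma Hd2 : (0 < n)%N -> (d < k)%N.
Proof. by move=> /hdeg_ball_ge; have := hdeg_g kk i0; lia. Qed.

Lemma Kc_Cc p : Kc k d (g i0) p -> CC p.
Proof.
move=> [G0 [G1 [p0 p1 ->]]].
exists G0, (@injT _ Tg (fun i => 0) i0 G1), (fun j => 0); split => //.
  by apply: (injT_prop (P := fun i (X : Tg i) => psd X)) => // i; apply: psd0.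
rewrite (sum_injT (fun i (X : Tg i) => g i * gram X)) /=.
rewrite big1 ?addr0; last by move=> i _; rewrite gram0 mulr0.
by rewrite big1 ?addr0 // => i _; rewrite lin0 mulr0.
Qed.

Lemma ounitC v : deg_le v (2 * k)%N -> ounit CC 1 v.
Proof.
move=> dv; split.
  have [T KT] := bound_poly Rpos gi0 Hd1 Hd0 Hd2 dv.
  by exists T; rewrite -alg_mpolyC in KT; apply: Kc_Cc.
have [T KT] := bound_poly Rpos gi0 Hd1 Hd0 Hd2 (deg_leN dv).
by exists T; rewrite -alg_mpolyC opprK addrC in KT; apply: Kc_Cc.
Qed.

Lemma slater : sos_slater f g h k.
Proof.
pose p := f - \sum_(i | i != i0) g i * gram (1%:M : Tg i).
have dp : deg_le p (2 * k)%N.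
  apply: deg_leB; first exact: (deg_f kk).
  by apply: deg_le_sum => i _; apply: (deg_g kk).
have [T [P0 [P1 [pP0 pP1 EP]]]] := bound_poly Rpos gi0 Hd1 Hd0 Hd2 (deg_leN dp).
have [M [Q0 [Q1 [pQ0 pQ1 EQ]]]] := margin Rpos gi0 Hd1 Hd0 Hd2.
exists (- (T + M)), (1%:M + (P0 + Q0)),
  (@injT _ Tg (fun i => 1%:M) i0 (1%:M + (P1 + Q1))), (fun j => 0).
split.
- by apply: pd_1psd; apply: psdD.
- apply: (injT_prop (P := fun i (X : Tg i) => pd X)).
    by move=> i; rewrite -[1%:M]addr0; apply: pd_1psd; apply: psd0.
  by apply: pd_1psd; apply: psdD.
rewrite /sos_identity.
rewrite (sum_injT (fun i (X : Tg i) => g i * gram X)) /=.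
rewrite [\sum_(j < l) _]big1 ?addr0; last by move=> j _; rewrite lin0 mulr0.
rewrite !gramD rmorphN opprK rmorphD /=.
have Ef : f = p + \sum_(i | i != i0) g i * gram (1%:M : Tg i) by rewrite /p subrK.
rewrite {1}Ef.
move: EP EQ; rewrite opprK => EP EQ.
have -> : p = gram P0 + g i0 * gram P1 - T%:MP by rewrite -EP addrC addKr.
have -> : M%:MP = gram Q0 + g i0 * gram Q1 + gram (1%:M : 'M[R]_(sdim n k))
   + g i0 * gram (1%:M : Tg i0).
  by rewrite -EQ; ring.
ring.
Qed.

End Main2.
Section Dual.
Variables (R : realType) (n m l : nat) (f : {mpoly R[n]})
  (g : 'I_m -> {mpoly R[n]}) (h : 'I_l -> {mpoly R[n]}) (k : nat).
Hypotheses (kk : (kmin f g h <= k)%N).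

Lemma Ly_gram (y : 'X_{1..n} -> R) e (G : 'M[R]_(sdim n e)) :
  Ly y (gram G) = \sum_a \sum_b G a b * momM e y a b.
Proof.
rewrite /gram Ly_sum; apply: eq_bigr => a _; rewrite Ly_sum; apply: eq_bigr => b _.
by rewrite LyX mxE.
Qed.

Lemma Ly_qgram (y : 'X_{1..n} -> R) e (q : {mpoly R[n]}) (G : 'M[R]_(sdim n e)) :
  Ly y (q * gram G) = \sum_a \sum_b G a b * locM e q y a b.
Proof.
rewrite /gram mulr_sumr Ly_sum; apply: eq_bigr => a _.
rewrite mulr_sumr Ly_sum; apply: eq_bigr => b _.
by rewrite -scalerAr LyZ Ly_shift mxE.
Qed.

Lemma Ly_qlin (y : 'X_{1..n} -> R) e (q : {mpoly R[n]}) (u : 'cV[R]_(sdim n e)) :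
  Ly y (q * lin u) = \sum_a u a 0 * Ly y (q * 'X_[mon a]).
Proof.
rewrite /lin mulr_sumr Ly_sum; apply: eq_bigr => a _.
by rewrite -scalerAr LyZ.
Qed.

Lemma sum_xxT N (x : 'cV[R]_N) (M : 'M[R]_N) :
  \sum_a \sum_b (x *m x^T) a b * M a b = qf M x.
Proof.
rewrite qfE /bf; apply: eq_bigr => a _; apply: eq_bigr => b _.
by rewrite !mxE big_ord1 !mxE; ring.
Qed.

Lemma weak xi (y : {ffun 'X_{1..n < (2 * k).+1} -> R}) : sos_feasible f g h k xi -> mom_feasible g h y ->
  xi <= Ly (yext y) f.
Proof.
move=> [G0 [G [u [p0 pG E]]]] [pM y0 pL hL].
have : Ly (yext y) (f - xi%:MP) = Ly (yext y) f - xi.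
  by rewrite LyB LyC y0 mulr1.
rewrite E !LyD.
have T1 : 0 <= Ly (yext y) (gram G0).
  by rewrite Ly_gram; apply: frob => // x; apply: pM.2.
have T2 : 0 <= Ly (yext y) (\sum_i g i * gram (G i)).
  rewrite Ly_sum; apply: sumr_ge0 => i _; rewrite Ly_qgram; apply: frob => // x; apply: (pL i).2.
have T3 : Ly (yext y) (\sum_j h j * lin (u j)) = 0.
  rewrite Ly_sum; apply: big1 => j _; rewrite Ly_qlin; apply: big1 => a _.
  have [a1 [a2 Ea]] := mon_split (mon_deg a).
  rewrite -Ea Ly_shift.
  suff -> : Ly (fun c => yext y (mon a1 + mon a2 + c)%MM) (h j) = 0 by rewrite mulr0.
  by have := congr1 (fun M : 'M[R]_(sdim n (k - hdeg (h j))) => M a1 a2) (hL j); rewrite /= !mxE.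
rewrite T3 addr0 => H; lra.
Qed.

End Dual.
Section Strong.
Variables (R : realType) (n m l : nat) (f : {mpoly R[n]})
  (g : 'I_m -> {mpoly R[n]}) (h : 'I_l -> {mpoly R[n]}) (Rad : R) (k : nat) (i0 : 'I_m).
Hypotheses (Rpos : 0 < Rad) (kk : (kmin f g h <= k)%N)
  (gi0 : g i0 = Rad%:MP - \sum_(t < n) 'X_t ^+ 2).

Local Notation CC := (Cc g h k).
Local Notation S := (fun xi => sos_feasible f g h k xi).

Lemma strong : has_ubound S -> (exists xi, S xi) ->
  exists y : {ffun 'X_{1..n < (2 * k).+1} -> R},
    mom_feasible g h y /\ Ly (yext y) f = sup S.
Proof.
move=> [B HB] [xi0 Sxi0].
have C0 : CC 0 := Cc0 g h k.
have Clin : forall a x y, 0 <= a -> CC x -> CC y -> CC (a *: x + y).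
  by move=> a x y; apply: Cc_lin.
pose W0 := fun p : {mpoly R[n]} => exists c, p = c%:MP.
pose phi0 := fun p : {mpoly R[n]} => p@_0%MM.
have sW0 : subsp W0.
  split; first by exists 0; rewrite raddf0.
  move=> a x y [c1 ->] [c2 ->]; exists (a * c1 + c2).
  by rewrite rmorphD rmorphM /= mul_mpolyC.
have lW0 : lin_on W0 phi0 by move=> a x y _ _; rewrite /phi0 mcoeffD mcoeffZ.
have pW0 : pos_on CC W0 phi0.
  move=> x [c ->] Cx; rewrite /phi0 mcoeffC eqxx mulr1.
  rewrite leNgt; apply/negP => cneg.
  have Bxi : xi0 <= B by apply: HB.
  pose t := (B - xi0 + 1) / (- c).
  have t0 : 0 <= t by rewrite /t divr_ge0 // ?oppr_ge0 ?ltW //; lra.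
  have St : S (xi0 - t * c).
    apply/feasE.
    have -> : f - (xi0 - t * c)%:MP = t *: c%:MP + (f - xi0%:MP).
      by rewrite rmorphB rmorphM /= -mul_mpolyC; ring.
    exact: Clin.
  have := HB _ St.
  have -> : xi0 - t * c = B + 1 by rewrite /t; field; rewrite ?oppr_eq0 lt_eqF.
  lra.
have W01 : W0 1 by exists 1; rewrite mpolyC1.
have ouf := ounitC Rpos kk gi0 (deg_f kk).
have [phi1 [l1 p1 a1 v1]] := riesz_step C0 Clin sW0 lW0 pW0 W01 ouf.
have lowE : lowset CC W0 phi0 f = S.
  apply: funext => z; apply: propext; split.
    by move=> [w [[c ->] Cw ->]]; rewrite /phi0 mcoeffC eqxx mulr1.
  by move=> Sz; exists z%:MP; split => //; [exists z|rewrite /phi0 mcoeffC eqxx mulr1].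
rewrite lowE in v1.
pose s := [seq 'X_[bmnm a] | a <- enum {: 'X_{1..n < (2 * k).+1}}] : seq {mpoly R[n]}.
have ous : forall v, v \in s -> ounit CC 1 v.
  move=> v /mapP [a _ ->]; apply: (ounitC Rpos kk gi0); apply: deg_leX.
  by have := bmdeg a.
have sW1 := subsp_ext f sW0.
have W1e : ext W0 f 1 by exists 1, 0; rewrite scale0r addr0.
have [W' [phi' [s' l' p' a' m']]] := riesz_list C0 Clin sW1 l1 p1 W1e ous.
have WX mm : (mdeg mm <= 2 * k)%N -> W' 'X_[mm].
  move=> Hm; have Hm' : (mdeg mm < (2 * k).+1)%N by [].
  apply: m'; apply/mapP; exists (BMultinom Hm') => //; exact: mem_enum.
have Wdeg p : deg_le p (2 * k)%N ->
    W' p /\ phi' p = \sum_(mm <- msupp p) p@_mm * phi' 'X_[mm].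
  move=> /deg_leP dp.
  suff : W' (\sum_(mm <- msupp p) p@_mm *: 'X_[mm]) /\
    phi' (\sum_(mm <- msupp p) p@_mm *: 'X_[mm]) = \sum_(mm <- msupp p) p@_mm * phi' 'X_[mm].
    by rewrite -mpolyE.
  by apply: (lin_sum s' l') => mm /dp; apply: WX.
pose y : {ffun 'X_{1..n < (2 * k).+1} -> R} := [ffun a => phi' 'X_[bmnm a]].
have yextE mm : (mdeg mm <= 2 * k)%N -> yext y mm = phi' 'X_[mm].
  move=> Hm; rewrite /yext; case: insubP => [u _ Eu|nH] /=.
    by rewrite ffunE Eu.
  by exfalso; move/negP: nH; apply.
have LyE' p : deg_le p (2 * k)%N -> Ly (yext y) p = phi' p.
  move=> dp; have [_ ->] := Wdeg p dp; rewrite /Ly big_seq [RHS]big_seq.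
  apply: eq_bigr => mm Hmm; rewrite yextE //; by move/deg_leP: dp; apply.
have phi'1 : phi' 1 = 1.
  have [_ ->] := a' 1 W1e; rewrite a1 //= /phi0 mcoeff1 eqxx //.
have ext_f : ext W0 f f by exists 0, 1; rewrite scale1r add0r; split => //; exists 0; rewrite raddf0.
exists y; split; last first.
  by rewrite LyE' ?(deg_f kk) //; have [_ ->] := a' f ext_f.
split.
- split.
    by apply/matrixP => a b; rewrite !mxE addmC.
  move=> x; rewrite -/(qf _ x) -sum_xxT -Ly_gram LyE' ?gram_deg //.
  apply: p'; first by apply: (Wdeg _ (gram_deg _)).1.
  by apply: Cc_gram; apply: psd_xxT.
- by rewrite yextE ?mdeg0 // mpolyX0.
- move=> i; split.
    apply/matrixP => a b; rewrite !mxE; congr Ly; apply: funext => c.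
    by rewrite (addmC (mon b)).
  move=> x; rewrite -/(qf _ x) -sum_xxT -Ly_qgram LyE' ?(deg_g kk) //.
  apply: p'; first by apply: (Wdeg _ (deg_g kk _)).1.
  by apply: Cc_g; apply: psd_xxT.
- move=> j; apply/matrixP => a b; rewrite !mxE -Ly_shift.
  have dX : (mdeg (mon a + mon b)%MM <= 2 * (k - hdeg (h j)))%N.
    by rewrite mdegD; have := mon_deg a; have := mon_deg b; lia.
  have [c Ec] := mon_surj dX.
  have dh : deg_le (h j * 'X_[mon a + mon b]) (2 * k)%N.
    by rewrite -Ec; apply: (deg_hX kk).
  rewrite LyE' //.
  have Wh := (Wdeg _ dh).1.
  have linE : lin (ev c : 'cV[R]_(sdim n (2 * (k - hdeg (h j))))) = 'X_[mon a + mon b].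
    by rewrite /lin sum_ev Ec.
  have P1 : 0 <= phi' (h j * 'X_[mon a + mon b]).
    by apply: p' => //; rewrite -linE; apply: Cc_h.
  have P2 : 0 <= phi' (- (h j * 'X_[mon a + mon b])).
    apply: p'; first by apply: (sWN s').
    have := Cc_h g ((-1) *: (ev c : 'cV[R]_(sdim n (2 * (k - hdeg (h j)))))).
    by rewrite -[_ *: _]addr0 lin_lin lin0 addr0 linE scaleN1r mulrN.
  rewrite (phiN s' l') // in P2; lra.
Qed.

End Strong.
Theorem corollary1 (R : realType) (n m l : nat) (f : {mpoly R[n]})
  (g : 'I_m -> {mpoly R[n]}) (h : 'I_l -> {mpoly R[n]}) (Rad : R) :
  0 < Rad ->
  (exists i : 'I_m, g i = Rad%:MP - \sum_(t < n) 'X_t ^+ 2) ->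
  forall k : nat, (kmin f g h <= k)%N ->
    sos_slater f g h k /\ rho f g h k = tau f g h k.
Proof.
move=> Rpos [i0 gi0] k kk.
have sl := slater Rpos kk gi0.
split => //.
have Sne : exists xi, sos_feasible f g h k xi.
  move: sl => [xi [G0 [G [u [p0 pG E]]]]].
  exists xi, G0, G, u; split => //; first exact: psd_pd.
  by move=> i; apply: psd_pd.
apply/eqP; rewrite eq_le; apply/andP; split.
  apply: ge_ereal_sup => z [xi Sxi <-].
  apply: le_ereal_inf_tmp => w [y Yy <-].
  by rewrite lee_fin; apply: (weak Sxi Yy).
have [ub|nub] := pselect (has_ubound (fun xi => sos_feasible f g h k xi)).
  have -> : rho f g h k = (sup (fun xi => sos_feasible f g h k xi))%:E.
    exact: (ereal_sup_EFin ub Sne).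
  have [y [Fy HLy]] := strong Rpos kk gi0 ub Sne.
  apply: ge_ereal_inf; exists (Ly (yext y) f)%:E; first by exists y.
  by rewrite HLy.
have -> : rho f g h k = +oo%E by exact: (hasNub_ereal_sup nub Sne).
exact: leey.
Qed.
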